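(* Let $K\ge1$ be an integer and $m>0$. For $x>0$ define $$g_{\mathbf 0}(x)=\int_{\{(t_1,\dots,t_K)\in[0,\infty)^K:\ \prod_{k=1}^K(1+t_k)\le x\}}\prod_{k=1}^K t_k^{m-1}\,dt_1\cdots dt_K .$$ Then $\mathcal R\mapsto g_{\mathbf 0}(2^{\mathcal R})$ is a monotonically increasing function of $\mathcal R>0$, it is convex in $\mathcal R$ whenever $m\ge1$, and consequently $C(\mathcal R)=\big(g_{\mathbf 0}(2^{\mathcal R})\big)^{-1/(mK)}$ is a monotonically decreasing function of $\mathcal R>0$. *)

(* Defs.v *)
From HB Require Import structures.
From mathcomp Require Import all_boot all_order all_algebra.
From mathcomp Require Import all_classical all_reals all_analysis.
Set Implicit Arguments. Unset Strict Implicit. Unset Printing Implicit Defensive.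
Import Order.TTheory GRing.Theory Num.Theory.
Local Open Scope classical_set_scope.
Local Open Scope ring_scope.

Fixpoint iter_int (R : realType) (n : nat) (F : seq R -> \bar R) : \bar R :=
  match n with
  | 0 => F [::]
  | n'.+1 => (\int[@lebesgue_measure R]_(t in `[0%R, +oo[)
               iter_int n' (fun s => F (t :: s)))%E
  end.

Definition g0_integrand (R : realType) (m x : R) (s : seq R) : \bar R :=
  if (\prod_(t <- s) (1 + t) <= x) then (\prod_(t <- s) (t `^ (m - 1)))%:E
  else 0%E.

Definition g0 (R : realType) (K : nat) (m x : R) : \bar R :=
  iter_int K (g0_integrand m x).

Definition Cfun (R : realType) (K : nat) (m r : R) : R :=
  (fine (g0 K m (2 `^ r))) `^ (- (1 / (m * K%:R))).

(* Main.v *)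
Require Import Defs.
From HB Require Import structures.
From mathcomp Require Import all_boot all_order all_algebra.
From mathcomp Require Import all_classical all_reals all_analysis.
From mathcomp Require Import measurable_realfun lra.
Import Order.TTheory GRing.Theory Num.Theory numFieldNormedType.Exports.
Local Open Scope classical_set_scope.
Local Open Scope ring_scope.

Definition Dp (R : realType) : set R := `[0%R, +oo[.

Lemma integrand_cons (R : realType) (m x t : R) (s : seq R) : 0 <= t ->
  g0_integrand m x (t :: s) = ((t `^ (m - 1))%:E * g0_integrand m (x / (1 + t)) s)%E.
Proof.
move=> t0; rewrite /g0_integrand !big_cons.
have t1 : 0 < 1 + t by rewrite ltr_pwDl.
rewrite ler_pdivlMr // mulrC.
by case: ifP => _; rewrite ?EFinM ?mule0.
Qed.

Lemma g0_nil (R : realType) (m x : R) :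
  g0 0 m x = if 1 <= x then 1%E else 0%E.
Proof. by rewrite /g0 /= /g0_integrand !big_nil. Qed.


Set Implicit Arguments. Unset Strict Implicit. Unset Printing Implicit Defensive.

Lemma Dp_meas (R : realType) : measurable (Dp R).
Proof. exact: measurable_itv. Qed.

Lemma Dp_ge0 (R : realType) (t : R) : Dp R t -> 0 <= t.
Proof. by rewrite /Dp /= in_itv /= andbT. Qed.

Lemma div1p_ge0 (R : realType) (x t : R) : 0 <= x -> 0 <= t -> 0 <= x / (1 + t).
Proof. by move=> x0 t0; rewrite divr_ge0 // addr_ge0. Qed.

Lemma div1p_le (R : realType) (x t : R) : 0 <= x -> 0 <= t -> x / (1 + t) <= x.
Proof.
move=> x0 t0; rewrite ler_pdivrMr ?ltr_pwDl //.
by rewrite ler_peMr // lerDl.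
Qed.

Lemma div1p_anti (R : realType) (x a b : R) : 0 <= x -> 0 <= a -> a <= b ->
  x / (1 + b) <= x / (1 + a).
Proof.
move=> x0 a0 ab; apply: ler_wpM2l => //.
rewrite lef_pV2 ?posrE ?ltr_pwDl ?(le_trans a0) //.
by rewrite lerD2l.
Qed.

Definition HS (R : realType) (m : R) n := forall x c, 0 <= x -> 0 <= c ->
  iter_int n (fun s => (c%:E * g0_integrand m x s)%E) = (c%:E * g0 n m x)%E.
Definition HF (R : realType) (m : R) n := forall x, 0 <= x ->
  g0 n m x = (fine (g0 n m x))%:E /\ 0 <= fine (g0 n m x).
Definition HM (R : realType) (m : R) n := forall x y, 0 <= x -> x <= y ->
  fine (g0 n m x) <= fine (g0 n m y).
Definition HZ (R : realType) (m : R) n := forall x, 0 <= x -> x < 1 -> g0 n m x = 0%E.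
Definition HP (R : realType) (m : R) n := forall x, 1 < x -> 0 < fine (g0 n m x).

Lemma g0_rec (R : realType) (m : R) n : HS m n -> forall x, 0 <= x ->
  g0 n.+1 m x = (\int[lebesgue_measure]_(t in Dp R)
      ((t `^ (m - 1))%:E * g0 n m (x / (1 + t))))%E.
Proof.
move=> hs x x0; rewrite /g0 /=.
apply: eq_integral => t; rewrite inE => /Dp_ge0 t0.
rewrite (_ : (fun s => g0_integrand m x (t :: s)) =
   (fun s => ((t `^ (m - 1))%:E * g0_integrand m (x / (1 + t)) s)%E)).
  by rewrite hs // ?div1p_ge0 // powR_ge0.
by apply/funext => s; rewrite integrand_cons.
Qed.

Lemma g0_rec' (R : realType) (m : R) n : HS m n -> HF m n -> forall x, 0 <= x ->
  g0 n.+1 m x = (\int[lebesgue_measure]_(t in Dp R)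
      ((t `^ (m - 1)) * fine (g0 n m (x / (1 + t))))%:E)%E.
Proof.
move=> hs hf x x0; rewrite g0_rec //.
apply: eq_integral => t; rewrite inE => /Dp_ge0 t0.
by rewrite EFinM -(hf _ (div1p_ge0 x0 t0)).1.
Qed.

Lemma meas_integrand (R : realType) (m : R) n : HM m n -> forall x, 0 <= x ->
  measurable_fun (Dp R) (fun t => ((t `^ (m - 1)) * fine (g0 n m (x / (1 + t))))%:E).
Proof.
move=> hm x x0; apply/measurable_EFinP.
apply: measurable_funM; first exact: measurable_funTS (measurable_powR _).
have h : measurable_fun (Dp R) (fun t => fine (g0 n m (x / (1 + Num.max t 0)))).
  apply: nonincreasing_measurable; first exact: Dp_meas.
  move=> a b ab; apply: hm; first by rewrite div1p_ge0 // le_max lexx orbT.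
  apply: div1p_anti => //; first by rewrite le_max lexx orbT.
  by rewrite ge_max; apply/andP; split; rewrite le_max ?ab ?lexx ?orbT.
apply: eq_measurable_fun h.
by move=> t; rewrite inE => /Dp_ge0 t0; rewrite max_l.
Qed.


Lemma powR_cont (R : realType) (p x : R) : 0 < x -> {for x, continuous (fun t : R => t `^ p)}.
Proof.
move=> x0; apply: differentiable_continuous; apply/derivable1_diffP.
by apply: derivable_powR; rewrite in_itv /= andbT.
Qed.

Lemma powR_right0 (R : realType) (p : R) : 0 <= p ->
  (fun t => t `^ p) @ (0:R)^'+ --> 0 `^ p.
Proof.
rewrite le_eqVlt => /orP[/eqP <-|p0].
  rewrite powRr0 (_ : (fun t : R => t `^ 0) = cst 1); first exact: cvg_cst.
  by apply/funext => t; rewrite powRr0.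
by rewrite powR0 ?gt_eqF //; exact: powR_cvg0.
Qed.

Lemma ftc_pow (R : realType) (m e a : R) : 0 < m -> 0 <= e -> e < a -> (0 < e \/ 1 <= m) ->
  (\int[lebesgue_measure]_(t in `[e, a]) (t `^ (m - 1))%:E =
   ((a `^ m - e `^ m) / m)%:E)%E.
Proof.
move=> m0 e0 ea he.
have a0 : 0 < a by exact: le_lt_trans ea.
pose F := fun t : R => t `^ m * m^-1.
have -> : ((a `^ m - e `^ m) / m = F a - F e) by rewrite /F mulrBl.
rewrite EFinB; apply: continuous_FTC2 => //.
- apply/continuous_within_itvP => //; split.
  + move=> x; rewrite in_itv /= => /andP[ex _]; apply: powR_cont.
    exact: le_lt_trans ex.
  + case: he => [e0'|m1].
      by apply: cvg_at_right_filter; apply: powR_cont.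
    move: e0; rewrite le_eqVlt => /orP[/eqP <-|e0']; last first.
      by apply: cvg_at_right_filter; apply: powR_cont.
    by apply: powR_right0; rewrite subr_ge0.
  + by apply: cvg_at_left_filter; apply: powR_cont.
- split.
  + move=> x; rewrite in_itv /= => /andP[ex _].
    apply: derivableM; last exact: derivable_cst.
    by apply: derivable_powR; rewrite in_itv /= andbT (le_lt_trans e0).
  + apply: cvgMr_tmp.
    move: e0; rewrite le_eqVlt => /orP[/eqP <-|e0']; last first.
      by apply: cvg_at_right_filter; apply: powR_cont.
    by apply: powR_right0; rewrite ltW.
  + by apply: cvgMr_tmp; apply: cvg_at_left_filter; apply: powR_cont.
- move=> x; rewrite in_itv /= => /andP[ex _].
  have x0 : 0 < x by exact: le_lt_trans ex.
  rewrite /F derive1Mr; last by apply: derivable_powR; rewrite in_itv /= andbT.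
  by rewrite powR_derive1 ?in_itv /= ?andbT // mulrAC mulfV ?gt_eqF // mul1r.
Qed.


Lemma indic_to_itv (R : realType) (f : R -> R) (e a : R) : 0 <= e ->
  (\int[lebesgue_measure]_(t in Dp R) (f t * \1_(`[e, a] : set R) t)%:E =
   \int[lebesgue_measure]_(t in `[e, a]) (f t)%:E)%E.
Proof.
move=> e0; rewrite integral_mkcond [RHS]integral_mkcond.
apply: eq_integral => t _; rewrite /patch indicE.
have [tin|tnin] := boolP (t \in (`[e, a]%classic : set R)).
  rewrite mulr1 ifT //; rewrite /Dp mem_set //=.
  move: tin; rewrite inE /= !in_itv /= => /andP[+ _].
  by move=> et; rewrite (le_trans e0 et).
by rewrite mulr0; case: ifP.
Qed.

Lemma pow_int (R : realType) (m a : R) : 1 <= m -> 0 < a ->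
  (\int[lebesgue_measure]_(t in Dp R) (t `^ (m - 1) * \1_(`[0, a] : set R) t)%:E =
   (a `^ m / m)%:E)%E.
Proof.
move=> m1 a0; have m0 : 0 < m by exact: lt_le_trans m1.
rewrite indic_to_itv // ftc_pow //; last by right.
by rewrite powR0 ?gt_eqF // subr0.
Qed.

Lemma indic_sub (R : realType) (T : Type) (A B : set T) (t : T) : A `<=` B ->
  \1_A t <= \1_B t :> R.
Proof.
move=> AB; rewrite !indicE; have [tA|tA] := boolP (t \in A).
  by rewrite (mem_set (AB _ (set_mem tA))).
by rewrite ler_nat.
Qed.

Lemma pow_le_lt1 (R : realType) (m a : R) : 0 < m -> m < 1 -> 0 < a ->
  (\int[lebesgue_measure]_(t in Dp R) (t `^ (m - 1) * \1_(`[0, a] : set R) t)%:E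
   <= (a `^ m / m)%:E)%E.
Proof.
move=> m0 m1 a0.
pose e (k : nat) := a / k.+2%:R.
have e0 k : 0 < e k by rewrite divr_gt0.
have ea k : e k < a by rewrite ltr_pdivrMr // ltr_pMr // ltr1n.
pose g (k : nat) (t : R) := (t `^ (m - 1) * \1_(`[e k, a] : set R) t)%:E.
have mg k : measurable_fun (Dp R) (g k).
  apply/measurable_EFinP; apply: measurable_funM.
    exact: measurable_funTS (measurable_powR _).
  by apply: measurable_indic; exact: measurable_itv.
have g0 k t : Dp R t -> (0 <= g k t)%E.
  by move=> _; rewrite lee_fin mulr_ge0 ?powR_ge0.
have gnd t : Dp R t -> {homo g^~ t : k k' / (k <= k')%N >-> (k <= k')%E}.
  move=> _ k k' kk'; rewrite lee_fin ler_wpM2l ?powR_ge0 //.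
  apply: indic_sub => x /=; rewrite !in_itv /= => /andP[ekt ->].
  rewrite andbT (le_trans _ ekt) //.
  by rewrite ler_pM2l // lef_pV2 ?posrE ?ltr0n // ler_nat.
have lim_g t : Dp R t -> limn (g^~ t) = (t `^ (m - 1) * \1_(`[0, a] : set R) t)%:E.
  move=> /Dp_ge0; rewrite le_eqVlt => /orP[/eqP <-|t0].
    rewrite powR0 ?mul0r; last by rewrite subr_eq0 lt_eqF.
    rewrite (_ : g^~ 0 = fun=> 0%E); first exact: lim_cst.
    by apply/funext => k; rewrite /g powR0 ?mul0r // subr_eq0 lt_eqF.
  have [ta|at_] := leP t a.
    apply: cvg_lim => //; apply: cvg_near_cst.
    exists (Num.Def.trunc (a / t)) => // k /= hk.
    rewrite /g !indicE !mem_set //= !in_itv /= ?ta ?(ltW t0) // andbT.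
    rewrite /e ler_pdivrMr // -ler_pdivrMl //.
    apply: le_trans (ltW (truncnS_gt _)) _.
    by rewrite [t^-1 * a]mulrC ler_nat ltnS (leq_trans hk).
  rewrite indicE memNset /=; last by rewrite /= in_itv /= => /andP[_]; rewrite leNgt at_.
  rewrite mulr0 (_ : g^~ t = fun=> 0%E); first exact: lim_cst.
  apply/funext => k; rewrite /g indicE memNset ?mulr0 //=.
  by rewrite /= in_itv /= => /andP[_]; rewrite leNgt at_.
rewrite [X in (X <= _)%E](_ : _ = \int[lebesgue_measure]_(t in Dp R) limn (g^~ t))%E;
  last by apply: eq_integral => t; rewrite inE => Dt; rewrite lim_g.
have h : (\int[lebesgue_measure]_(x in Dp R) g k x)%E @[k --> \oo] -->
   (\int[lebesgue_measure]_(x in Dp R) limn (g^~ x))%E.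
  apply: cvg_monotone_convergence.
  - exact: Dp_meas.
  - move=> k; exact: mg.
  - move=> k t Dt; exact: g0.
  - move=> t Dt; exact: gnd.
rewrite -(cvg_lim _ h) //.
apply: lime_le; first exact: cvgP h.
apply: nearW => k.
rewrite /g indic_to_itv ?(ltW (e0 k)) // ftc_pow //; last by left.
rewrite lee_fin ler_pM2r ?invr_gt0 // gerBl powR_ge0 //.
by rewrite ltW.
Qed.

Lemma pow_fin (R : realType) (m a : R) : 0 < m -> 0 <= a ->
  (\int[lebesgue_measure]_(t in Dp R) (t `^ (m - 1) * \1_(`[0, a] : set R) t)%:E < +oo)%E.
Proof.
move=> m0 a0; have a1 : 0 < a + 1 by rewrite ltr_wpDl.
have mf b : measurable_fun (Dp R) (fun t => (t `^ (m - 1) * \1_(`[0, b] : set R) t)%:E).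
  apply/measurable_EFinP; apply: measurable_funM.
    exact: measurable_funTS (measurable_powR _).
  by apply: measurable_indic; exact: measurable_itv.
apply: (le_lt_trans (y := \int[lebesgue_measure]_(t in Dp R)
   (t `^ (m - 1) * \1_(`[0, a + 1] : set R) t)%:E)%E).
  apply: ge0_le_integral => //; first exact: Dp_meas.
  - by move=> t _; rewrite lee_fin mulr_ge0 ?powR_ge0.
  - exact: mf.
  - exact: mf.
  move=> t _; rewrite lee_fin ler_wpM2l ?powR_ge0 //.
  apply: indic_sub => x /=; rewrite !in_itv /= => /andP[-> xa] /=.
  by rewrite (le_trans xa) // lerDl.
have [m1|m1] := leP 1 m; first by rewrite pow_int // ltry.
exact: le_lt_trans (pow_le_lt1 m0 m1 a1) (ltry _).
Qed.



Lemma HS_step (R : realType) (m : R) n : HS m n -> HF m n -> HM m n -> HS m n.+1.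
Proof.
move=> hs hf hM x c x0 c0 /=.
rewrite g0_rec' //.
transitivity (\int[lebesgue_measure]_(t in Dp R)
   (c%:E * ((t `^ (m - 1)) * fine (g0 n m (x / (1 + t))))%:E))%E; last first.
  rewrite ge0_integralZl_EFin //; first exact: Dp_meas.
    move=> t /Dp_ge0 t0; rewrite lee_fin mulr_ge0 ?powR_ge0 //.
    exact: (hf _ (div1p_ge0 x0 t0)).2.
  exact: meas_integrand.
apply: eq_integral => t; rewrite inE => /Dp_ge0 t0.
rewrite (_ : (fun s => c%:E * g0_integrand m x (t :: s)) =
   (fun s => ((c * t `^ (m - 1))%:E * g0_integrand m (x / (1 + t)) s)))%E.
  rewrite hs ?div1p_ge0 ?mulr_ge0 ?powR_ge0 //.
  by rewrite EFinM EFinM -muleA -(hf _ (div1p_ge0 x0 t0)).1.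
by apply/funext => s; rewrite integrand_cons // EFinM muleA.
Qed.

Lemma integrand_ge0 (R : realType) (m : R) n : HF m n -> forall x t, 0 <= x -> Dp R t ->
  (0 <= ((t `^ (m - 1)) * fine (g0 n m (x / (1 + t))))%:E)%E.
Proof.
move=> hf x t x0 /Dp_ge0 t0; rewrite lee_fin mulr_ge0 ?powR_ge0 //.
exact: (hf _ (div1p_ge0 x0 t0)).2.
Qed.

Lemma HF_step (R : realType) (m : R) n : 0 < m ->
  HS m n -> HF m n -> HM m n -> HZ m n -> HF m n.+1.
Proof.
move=> m0 hs hf hM hz x x0.
have g0ge0 : (0 <= g0 n.+1 m x)%E.
  by rewrite g0_rec' //; apply: integral_ge0 => t Dt; exact: integrand_ge0.
suff fin : (g0 n.+1 m x < +oo)%E.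
  have hfin : g0 n.+1 m x \is a fin_num by rewrite ge0_fin_numE.
  by split; [rewrite fineK | rewrite fine_ge0].
rewrite g0_rec' //.
apply: (le_lt_trans (y := (\int[lebesgue_measure]_(t in Dp R)
   ((fine (g0 n m x))%:E * (t `^ (m - 1) * \1_(`[0, x] : set R) t)%:E))%E)).
  apply: ge0_le_integral; first exact: Dp_meas.
  - by move=> t Dt; exact: integrand_ge0.
  - exact: meas_integrand.
  - apply/measurable_EFinP; apply: measurable_funM; first exact: measurable_cst.
    apply: measurable_funM; first exact: measurable_funTS (measurable_powR _).
    by apply: measurable_indic; exact: measurable_itv.
  move=> t /Dp_ge0 t0; rewrite -EFinM lee_fin.
  have [tx|xt] := leP t x.
    rewrite indicE mem_set; last by rewrite /= in_itv /= t0 tx.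
    rewrite mulr1 mulrC ler_wpM2r ?powR_ge0 //.
    by apply: hM; [exact: div1p_ge0 | exact: div1p_le].
  rewrite hz ?div1p_ge0 //; last first.
    by rewrite ltr_pdivrMr ?ltr_pwDl // mul1r (lt_le_trans xt) // lerDr.
  by rewrite /= mulr0 mulr_ge0 ?(hf _ x0).2 // mulr_ge0 ?powR_ge0.
have -> : (\int[lebesgue_measure]_(t in Dp R)
   ((fine (g0 n m x))%:E * (t `^ (m - 1) * \1_(`[0, x] : set R) t)%:E) =
   (fine (g0 n m x))%:E * \int[lebesgue_measure]_(t in Dp R)
   (t `^ (m - 1) * \1_(`[0, x] : set R) t)%:E)%E.
  rewrite ge0_integralZl_EFin //; first exact: Dp_meas.
  - by move=> t /Dp_ge0 t0; rewrite lee_fin mulr_ge0 ?powR_ge0.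
  - apply/measurable_EFinP; apply: measurable_funM; first exact: measurable_funTS (measurable_powR _).
    by apply: measurable_indic; exact: measurable_itv.
  - exact: (hf _ x0).2.
by rewrite lte_mul_pinfty // ?pow_fin // lee_fin (hf _ x0).2.
Qed.

Lemma HM_step (R : realType) (m : R) n : 0 < m ->
  HS m n -> HF m n -> HM m n -> HZ m n -> HM m n.+1.
Proof.
move=> m0 hs hf hM hz x y x0 xy.
have y0 : 0 <= y by exact: le_trans xy.
have hf1 := HF_step m0 hs hf hM hz.
apply: fine_le; [by rewrite (hf1 _ x0).1 | by rewrite (hf1 _ y0).1 |].
rewrite !g0_rec' //; apply: ge0_le_integral; first exact: Dp_meas.
- by move=> t Dt; exact: integrand_ge0.
- exact: meas_integrand.
- exact: meas_integrand.
move=> t /Dp_ge0 t0; rewrite lee_fin ler_wpM2l ?powR_ge0 //.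
apply: hM; first exact: div1p_ge0.
by apply: ler_wpM2r => //; rewrite invr_ge0 addr_ge0.
Qed.

Lemma HZ_step (R : realType) (m : R) n : HS m n -> HZ m n -> HZ m n.+1.
Proof.
move=> hs hz x x0 x1; rewrite g0_rec //.
rewrite (eq_integral (fun _ => 0%E)); first by rewrite integral0.
move=> t; rewrite inE => /Dp_ge0 t0.
by rewrite hz ?mule0 ?div1p_ge0 // (le_lt_trans (div1p_le x0 t0)).
Qed.

Lemma base_inv (R : realType) (m : R) :
  [/\ HS m 0, HF m 0, HM m 0, HZ m 0 & HP m 0].
Proof.
split.
- by move=> x c _ _.
- move=> x _; rewrite g0_nil; case: ifP => _ //=.
- move=> x y _ xy; rewrite !g0_nil.
  case: ifP => hx; first by rewrite (le_trans hx xy).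
  by case: ifP.
- by move=> x _ x1; rewrite g0_nil leNgt x1.
- by move=> x x1; rewrite g0_nil ltW.
Qed.

Lemma powR_min (R : realType) (p a b t : R) : 0 < a -> a <= t -> t <= b ->
  Num.min (a `^ p) (b `^ p) <= t `^ p.
Proof.
move=> a0 at_ tb.
have t0 : 0 < t by exact: lt_le_trans at_.
have b0 : 0 < b by exact: lt_le_trans tb.
have [p0|p0] := leP 0 p.
  by rewrite ge_min ge0_ler_powR // ?nnegrE ?(ltW a0) ?(ltW t0).
rewrite ge_min; apply/orP; right.
have e : forall z, z `^ p = (z `^ (- p))^-1 by move=> z; rewrite -powRN opprK.
rewrite (e t) (e b) lef_pV2 ?posrE ?powR_gt0 //.
by rewrite ge0_ler_powR // ?nnegrE ?(ltW b0) ?(ltW t0) // oppr_ge0 ltW.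
Qed.

Lemma integral_indic_itv (R : realType) (d a b : R) : 0 <= d -> 0 <= a -> a <= b ->
  (\int[lebesgue_measure]_(t in Dp R) (d * \1_(`[a, b] : set R) t)%:E =
   (d * (b - a))%:E)%E.
Proof.
move=> d0 a0 ab.
have -> : (\int[lebesgue_measure]_(t in Dp R) (d * \1_(`[a, b] : set R) t)%:E =
   d%:E * \int[lebesgue_measure]_(t in Dp R) (\1_(`[a, b] : set R) t)%:E)%E.
  rewrite -ge0_integralZl_EFin //.
  - exact: Dp_meas.
  - apply/measurable_EFinP.
    by apply: measurable_indic; exact: measurable_itv.
rewrite integral_indic; [|exact: Dp_meas|exact: measurable_itv].
rewrite setIidl; last first.
  by move=> t /=; rewrite /Dp /= !in_itv /= andbT => /andP[+ _]; apply: le_trans.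
have := lebesgue_measure_itv `[a, b]; rewrite /= => ->.
have [ab'|ab'] := ltP a b.
  by rewrite lte_fin ab' -EFinD EFinM.
have -> : b = a by apply/eqP; rewrite eq_le ab ab'.
by rewrite ltxx subrr mulr0 mule0.
Qed.

Lemma strict_step (R : realType) (m : R) n : 0 < m ->
  HS m n -> HF m n -> HM m n -> HZ m n -> HP m n ->
  forall x y, 1 < x -> x < y -> fine (g0 n.+1 m x) < fine (g0 n.+1 m y).
Proof.
move=> m0 hs hf hM hz hp x y x1 xy.
have hf1 := HF_step m0 hs hf hM hz.
have x0 : 0 <= x by rewrite ltW // (lt_trans ltr01).
have y0 : 0 <= y by rewrite ltW // (lt_trans ltr01) // (lt_trans x1).
pose a := x - 1 + (y - x) / 3.
pose b := y - 1 - (y - x) / 3.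
have a0 : 0 < a by rewrite /a; lra.
have ab : a < b by rewrite /a /b; lra.
have xa : x < 1 + a by rewrite /a; lra.
have b0 : 0 < b by exact: lt_trans ab.
have yb : 1 < y / (1 + b) by rewrite ltr_pdivlMr ?ltr_pwDl ?ltW // mul1r /b; lra.
pose c := fine (g0 n m (y / (1 + b))).
have c0 : 0 < c by exact: hp.
pose mn := Num.min (a `^ (m - 1)) (b `^ (m - 1)).
have mn0 : 0 < mn by rewrite lt_min !powR_gt0.
pose d := c * mn.
have d0 : 0 < d by rewrite mulr_gt0.
have key : (g0 n.+1 m x + (d * (b - a))%:E <= g0 n.+1 m y)%E.
  rewrite !g0_rec' // -integral_indic_itv ?(ltW d0) ?(ltW a0) ?(ltW ab) //.
  rewrite -ge0_integralD; first last.
  - apply/measurable_EFinP; apply: measurable_funM; first exact: measurable_cst.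
    by apply: measurable_indic; exact: measurable_itv.
  - by move=> t _; rewrite lee_fin mulr_ge0 ?(ltW d0).
  - exact: meas_integrand.
  - by move=> t Dt; exact: integrand_ge0.
  - exact: Dp_meas.
  apply: ge0_le_integral; first exact: Dp_meas.
  - move=> t Dt; rewrite adde_ge0 ?integrand_ge0 //.
    by rewrite lee_fin mulr_ge0 ?(ltW d0).
  - apply: emeasurable_funD; first exact: meas_integrand.
    apply/measurable_EFinP; apply: measurable_funM; first exact: measurable_cst.
    by apply: measurable_indic; exact: measurable_itv.
  - exact: meas_integrand.
  move=> t /Dp_ge0 t0; rewrite -EFinD lee_fin.
  have [tab|tab] := boolP (a <= t <= b).
    case/andP: tab => at_ tb.
    rewrite indicE mem_set; last by rewrite /= in_itv /= at_ tb.
    rewrite hz ?div1p_ge0 //; last first.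
      by rewrite ltr_pdivrMr ?ltr_pwDl // mul1r (lt_le_trans xa) // lerD2l.
    rewrite /= mulr0 add0r mulr1 /d mulrC.
    apply: ler_pM; [exact: ltW | exact: ltW | exact: powR_min |].
    by rewrite /c; apply: hM; [rewrite div1p_ge0 // ltW | exact: div1p_anti].
  rewrite indicE memNset; last by rewrite /= in_itv /=; apply/negP; rewrite (negbTE tab).
  rewrite mulr0 addr0 ler_wpM2l ?powR_ge0 //.
  apply: hM; first exact: div1p_ge0.
  by rewrite ler_wpM2r ?invr_ge0 ?addr_ge0 // ltW.
move: key; rewrite (hf1 _ x0).1 (hf1 _ y0).1 -EFinD lee_fin => key.
apply: lt_le_trans key; rewrite ltrDl mulr_gt0 // subr_gt0 //.
Qed.

Lemma HP_step (R : realType) (m : R) n : 0 < m ->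
  HS m n -> HF m n -> HM m n -> HZ m n -> HP m n -> HP m n.+1.
Proof.
move=> m0 hs hf hM hz hp x x1.
have hf1 := HF_step m0 hs hf hM hz.
pose x' := (1 + x) / 2.
have x'1 : 1 < x' by rewrite /x'; lra.
have x'x : x' < x by rewrite /x'; lra.
apply: le_lt_trans (strict_step m0 hs hf hM hz hp x'1 x'x).
by apply: (hf1 _ _).2; rewrite /x'; lra.
Qed.

Lemma all_inv (R : realType) (m : R) n : 0 < m ->
  [/\ HS m n, HF m n, HM m n, HZ m n & HP m n].
Proof.
move=> m0; elim: n => [|n [hs hf hM hz hp]]; first exact: base_inv.
split.
- exact: HS_step.
- exact: HF_step.
- exact: HM_step.
- exact: HZ_step.
- exact: HP_step.
Qed.


Lemma amgm (R : realType) (x1 x2 l : R) : 0 < x1 -> 0 < x2 -> 0 <= l -> l <= 1 ->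
  x1 `^ l * x2 `^ (1 - l) <= l * x1 + (1 - l) * x2.
Proof.
move=> x10 x20 l0 l1.
have := concave_ln (Itv01 l0 l1) x10 x20.
rewrite !convRE /=.
have p1 : 0 < x1 `^ l by rewrite powR_gt0.
have p2 : 0 < x2 `^ (1 - l) by rewrite powR_gt0.
have q0 : 0 < l * x1 + (1 - l) * x2.
  nra.
rewrite -(ler_ln (x := x1 `^ l * x2 `^ (1 - l))) ?posrE ?mulr_gt0 //.
by rewrite lnM ?posrE // !ln_powR.
Qed.

Definition phi (R : realType) (m x : R) := (Num.max (x - 1) 0) `^ m / m.

Lemma phi_geo (R : realType) (m x1 x2 l : R) : 1 <= m -> 0 < x1 -> 0 < x2 -> 0 <= l -> l <= 1 ->
  phi m (x1 `^ l * x2 `^ (1 - l)) <= l * phi m x1 + (1 - l) * phi m x2.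
Proof.
move=> m1 x10 x20 l0 l1.
have m0 : 0 < m by exact: lt_le_trans m1.
rewrite /phi !mulrA -mulrDl ler_pM2r ?invr_gt0 //.
have hmx (y : R) : 0 <= Num.max (y - 1) 0 by rewrite le_max lexx orbT.
apply: (le_trans (y := (l * Num.max (x1 - 1) 0 + (1 - l) * Num.max (x2 - 1) 0) `^ m)).
  apply: ge0_ler_powR; rewrite ?nnegrE ?(ltW m0) ?hmx ?addr_ge0 ?mulr_ge0 ?subr_ge0 //.
  rewrite ge_max; apply/andP; split; last by rewrite addr_ge0 ?mulr_ge0 ?subr_ge0.
  apply: (le_trans (y := l * x1 + (1 - l) * x2 - 1)).
    by rewrite lerD2r amgm.
  have e1 : x1 - 1 <= Num.max (x1 - 1) 0 by rewrite le_max lexx.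
  have e2 : x2 - 1 <= Num.max (x2 - 1) 0 by rewrite le_max lexx.
  have l'0 : 0 <= 1 - l by rewrite subr_ge0.
  have := ler_wpM2l l0 e1; have := ler_wpM2l l'0 e2.
  set A := Num.max (x1 - 1) 0; set B := Num.max (x2 - 1) 0.
  move=> h2 h1; nra.
have := convex_powR m1 (Itv01 l0 l1).
move=> /(_ (Num.max (x1 - 1) 0) (Num.max (x2 - 1) 0)).
rewrite !inE /= !in_itv /= !andbT !hmx !convRE /=.
by move=> /(_ isT isT).
Qed.


Definition HC (R : realType) (m : R) n := forall x1 x2 l, 0 < x1 -> 0 < x2 -> 0 <= l <= 1 ->
  fine (g0 n m (x1 `^ l * x2 `^ (1 - l))) <=
  l * fine (g0 n m x1) + (1 - l) * fine (g0 n m x2).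

Lemma geo_div (R : realType) (x1 x2 l c : R) : 0 <= x1 -> 0 <= x2 -> 0 < c ->
  (x1 `^ l * x2 `^ (1 - l)) / c = (x1 / c) `^ l * (x2 / c) `^ (1 - l).
Proof.
move=> x10 x20 c0.
have ci : 0 <= c^-1 by rewrite invr_ge0 ltW.
rewrite !powRM // mulrACA -powRD; last by apply/implyP => _; rewrite invr_eq0 gt_eqF.
by rewrite addrCA subrr addr0 powRr1.
Qed.

Lemma meas_integrand_r (R : realType) (m : R) n : HM m n -> forall x, 0 <= x ->
  measurable_fun (Dp R) (fun t => (t `^ (m - 1)) * fine (g0 n m (x / (1 + t)))).
Proof. by move=> hM x x0; apply/measurable_EFinP; exact: meas_integrand. Qed.

Lemma HC_step (R : realType) (m : R) n : 0 < m ->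
  HS m n -> HF m n -> HM m n -> HZ m n -> HC m n -> HC m n.+1.
Proof.
move=> m0 hs hf hM hz hc x1 x2 l x10 x20 /andP[l0 l1].
have hf1 := HF_step m0 hs hf hM hz.
have l'0 : 0 <= 1 - l by rewrite subr_ge0.
set z := x1 `^ l * x2 `^ (1 - l).
have z0 : 0 <= z by rewrite mulr_ge0 ?powR_ge0.
pose A (x t : R) := t `^ (m - 1) * fine (g0 n m (x / (1 + t))).
have mA x : 0 <= x -> measurable_fun (Dp R) (fun t => (l * A x t)%:E).
  move=> x0; apply/measurable_EFinP; apply: measurable_funM; first exact: measurable_cst.
  exact: meas_integrand_r.
have mB x : 0 <= x -> measurable_fun (Dp R) (fun t => ((1 - l) * A x t)%:E).
  move=> x0; apply/measurable_EFinP; apply: measurable_funM; first exact: measurable_cst.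
  exact: meas_integrand_r.
have key : (g0 n.+1 m z <= l%:E * g0 n.+1 m x1 + (1 - l)%:E * g0 n.+1 m x2)%E.
  rewrite (g0_rec' hs hf z0) (g0_rec' hs hf (ltW x10)) (g0_rec' hs hf (ltW x20)).
  rewrite -!ge0_integralZl_EFin //; try exact: Dp_meas;
    try (by apply: meas_integrand => //; exact: ltW);
    try (by move=> t Dt; apply: integrand_ge0 => //; exact: ltW).
  rewrite -ge0_integralD; try exact: Dp_meas;
    try (by move=> t Dt; rewrite mule_ge0 ?lee_fin //; apply: integrand_ge0 => //; exact: ltW);
    try exact: mA (ltW x10); try exact: mB (ltW x20).
  apply: ge0_le_integral; first exact: Dp_meas.
  - by move=> t Dt; exact: integrand_ge0.
  - exact: meas_integrand.
  - apply: emeasurable_funD.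
      exact: mA (ltW x10).
    exact: mB (ltW x20).
  move=> t /Dp_ge0 t0; rewrite -!EFinM -EFinD lee_fin.
  have t1 : 0 < 1 + t by rewrite ltr_pwDl.
  rewrite /z geo_div ?(ltW x10) ?(ltW x20) // mulrCA [(1 - l) * _]mulrCA -mulrDr.
  rewrite ler_wpM2l ?powR_ge0 //.
  by apply: hc; rewrite ?divr_gt0 // l0 l1.
move: key; rewrite (hf1 _ z0).1 (hf1 _ (ltW x10)).1 (hf1 _ (ltW x20)).1.
by rewrite -!EFinM -EFinD lee_fin.
Qed.

Lemma g1_phi (R : realType) (m x : R) : 1 <= m -> 0 <= x ->
  fine (g0 1 m x) = (Num.max (x - 1) 0) `^ m / m.
Proof.
move=> m1 x0; have m0 : 0 < m by exact: lt_le_trans m1.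
have [hs hf hM hz hp] := base_inv m.
rewrite g0_rec' //.
have -> : (\int[lebesgue_measure]_(t in Dp R)
      (t `^ (m - 1) * fine (g0 0 m (x / (1 + t))))%:E =
    \int[lebesgue_measure]_(t in Dp R) (t `^ (m - 1) * \1_(`[0, x - 1] : set R) t)%:E)%E.
  apply: eq_integral => t; rewrite inE => /Dp_ge0 t0.
  have t1 : 0 < 1 + t by rewrite ltr_pwDl.
  rewrite g0_nil indicE ler_pdivlMr // mul1r.
  have [tx|tx] := boolP (1 + t <= x).
    rewrite mem_set //= in_itv /= t0 /=.
    by rewrite lerBrDl.
  rewrite memNset //= in_itv /= t0 /= lerBrDl.
  by apply/negP.
have [x1|x1] := ltP 1 x.
  rewrite pow_int // ?subr_gt0 //=.
  by rewrite max_l // subr_ge0 ltW.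
rewrite max_r ?subr_le0 // powR0 ?gt_eqF // mul0r.
apply/eqP; rewrite -[_ == _]/(fine _ == fine 0%E); apply/eqP; congr fine.
apply/eqP; rewrite eq_le; apply/andP; split; last first.
  by apply: integral_ge0 => t _; rewrite lee_fin mulr_ge0 ?powR_ge0.
apply: (le_trans (y := \int[lebesgue_measure]_(t in Dp R) (1 * \1_(`[0, 0] : set R) t)%:E)%E).
  apply: ge0_le_integral; first exact: Dp_meas.
  - by move=> t _; rewrite lee_fin mulr_ge0 ?powR_ge0.
  - apply/measurable_EFinP; apply: measurable_funM.
      exact: measurable_funTS (measurable_powR _).
    by apply: measurable_indic; exact: measurable_itv.
  - apply/measurable_EFinP; apply: measurable_funM; first exact: measurable_cst.
    by apply: measurable_indic; exact: measurable_itv.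
  move=> t /Dp_ge0 t0; rewrite lee_fin mul1r !indicE.
  have [tin|tnin] := boolP (t \in (`[0, x - 1]%classic : set R)); last by rewrite mulr0.
  have t00 : t = 0.
    move: tin; rewrite inE /= in_itv /= t0 /= => tx.
    by apply/eqP; rewrite eq_le t0 andbT (le_trans tx) // subr_le0.
  rewrite mulr1 t00 mem_set /=; last by rewrite in_itv /= lexx.
  have [->|mn1] := eqVneq (m - 1) 0; first by rewrite powRr0.
  by rewrite powR0.
by rewrite integral_indic_itv // mulr0.
Qed.

Lemma HC1 (R : realType) (m : R) : 1 <= m -> HC m 1.
Proof.
move=> m1 x1 x2 l x10 x20 /andP[l0 l1].
rewrite !g1_phi ?(ltW x10) ?(ltW x20) ?mulr_ge0 ?powR_ge0 //.
exact: (phi_geo m1 x10 x20 l0 l1).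
Qed.

Lemma HC_all (R : realType) (m : R) n : 1 <= m -> HC m n.+1.
Proof.
move=> m1; have m0 : 0 < m by exact: lt_le_trans m1.
elim: n => [|n IH]; first exact: HC1.
have [hs hf hM hz hp] := all_inv n.+1 m0.
exact: HC_step.
Qed.


Lemma pow2_lt (R : realType) (r1 r2 : R) : r1 < r2 -> 2 `^ r1 < 2 `^ r2.
Proof.
move=> r12; rewrite /powR pnatr_eq0 /= ltr_expR ltr_pM2r //.
by rewrite ln_gt0 // ltr1n.
Qed.

Lemma pow2_gt1 (R : realType) (r : R) : 0 < r -> 1 < 2 `^ r.
Proof. by move=> r0; have := pow2_lt r0; rewrite powRr0. Qed.

Unset Implicit Arguments.
Theorem lemma4 (R : realType) (K : nat) (m : R) (hK : (1 <= K)%N) (hm : 0 < m) :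
  (forall r1 r2 : R, 0 < r1 -> r1 < r2 ->
     (g0 K m (2 `^ r1) < g0 K m (2 `^ r2))%E)
  /\ (1 <= m -> forall (r1 r2 l : R), 0 < r1 -> 0 < r2 -> 0 <= l <= 1 ->
     (g0 K m (2 `^ (l * r1 + (1 - l) * r2))
        <= l%:E * g0 K m (2 `^ r1) + (1 - l)%:E * g0 K m (2 `^ r2))%E)
  /\ (forall r1 r2 : R, 0 < r1 -> r1 < r2 -> Cfun K m r2 < Cfun K m r1).
Proof.
case: K hK => // k _.
have [hs hf hM hz hp] := all_inv k hm.
have [hs1 hf1 hM1 hz1 hp1] := all_inv k.+1 hm.
have st : forall r1 r2 : R, 0 < r1 -> r1 < r2 ->
    fine (g0 k.+1 m (2 `^ r1)) < fine (g0 k.+1 m (2 `^ r2)).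
  move=> r1 r2 r10 r12; apply: strict_step => //.
    exact: pow2_gt1.
  exact: pow2_lt.
split; [|split].
- move=> r1 r2 r10 r12.
  rewrite (hf1 _ (powR_ge0 _ _)).1 (hf1 (2 `^ r2) (powR_ge0 _ _)).1 lte_fin.
  exact: st.
- move=> m1 r1 r2 l r10 r20 /andP[l0 l1].
  have -> : 2 `^ (l * r1 + (1 - l) * r2) = (2 `^ r1) `^ l * (2 `^ r2) `^ (1 - l).
    rewrite powRD; last by apply/implyP => _; rewrite pnatr_eq0.
    by rewrite -!powRrM [r1 * l]mulrC [r2 * (1 - l)]mulrC.
  rewrite (hf1 _ (mulr_ge0 (powR_ge0 _ _) (powR_ge0 _ _))).1.
  rewrite (hf1 _ (powR_ge0 _ _)).1 (hf1 (2 `^ r2) (powR_ge0 _ _)).1.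
  rewrite -!EFinM -EFinD lee_fin.
  apply: (HC_all k m1) => //; rewrite ?powR_gt0 // ?l0 ?l1 //.
- move=> r1 r2 r10 r12; rewrite /Cfun.
  have a0 : 0 < 1 / (m * k.+1%:R) by rewrite divr_gt0 // mulr_gt0 // ltr0n.
  have F1 : 0 < fine (g0 k.+1 m (2 `^ r1)) by apply: hp1; exact: pow2_gt1.
  have F12 := st _ _ r10 r12.
  rewrite !powRN ltf_pV2 ?posrE ?powR_gt0 //; last exact: lt_trans F12.
  by apply: gt0_ltr_powR; rewrite // nnegrE ltW // (lt_trans F1).
Qed.
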